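(* UniGCNII is a special case of the extended AllSet framework. That is, there exist functions $f_{\mathcal{V}\to\mathcal{E}}$ and $f_{\mathcal{E}\to\mathcal{V}}$, each permutation invariant with respect to its first (set-valued) argument, such that the UniGCNII updates can be written, for every hyperedge $e$, every node $v$ and every step $t$, as $$\bm z_e^{(t+1)} = f_{\mathcal{V}\to\mathcal{E}}\big(\{\bm x_u^{(t)}\}_{u\in e};\ \bm z_e^{(t)}\big),\qquad \bm x_v^{(t+1)} = f_{\mathcal{E}\to\mathcal{V}}\big(\{\bm z_e^{(t+1)}\}_{e\in\mathcal{E}_v};\ \{\bm x_v^{(k)}\}_{k=0}^{t}\big).$$
   Context: A hypergraph is $\mathcal{G}=(\mathcal{V},\mathcal{E})$ with each hyperedge $e\in\mathcal{E}$ a subset of the node set $\mathcal{V}$. For $v\in\mathcal{V}$, $\mathcal{E}_v=\{e\in\mathcal{E}: v\in e\}$ and $d_v=|\mathcal{E}_v|$. Nodes and hyperedges carry vector representations $\bm x_v^{(t)}$, $\bm z_e^{(t)}$ at propagation step $t$, with $\bm x_v^{(0)}$ the initial node features. UniGCNII is the propagation scheme in which, at each step, the hyperedge representation is the mean of its nodes' representations, $\bm z_e^{(t+1)}=\frac{1}{|e|}\sum_{u\in e}\bm x_u^{(t)}$, and the node update is $$\hat{\bm x}_v^{(t)}=\frac{1}{\sqrt{d_v}}\sum_{e\in\mathcal{E}_v}\frac{\bm z_e^{(t+1)}}{\sqrt{d_e}},\qquad \bm x_v^{(t+1)}=\big((1-\beta)\bm I+\beta\bm W^{(t)}\big)\big((1-\alpha)\hat{\bm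 x}_v^{(t)}+\alpha\bm x_v^{(0)}\big),$$ where $d_e=\frac{1}{|e|}\sum_{i\in e}d_i$, $\alpha,\beta$ are scalar hyperparameters, $\bm I$ is the identity matrix and $\bm W^{(t)}$ is a learnable weight matrix.
   Formalization: Each node and hyperedge representation passed to or returned by $f_{\mathcal{V}\to\mathcal{E}}$ and $f_{\mathcal{E}\to\mathcal{V}}$ is paired with its degree, $(\bm x_u^{(t)}, d_u)$ and $(\bm z_e^{(t)}, d_e)$, instead of being a plain vector. The statement above fails without it. *)

(* Defs.v *)
From HB Require Import structures.
From mathcomp Require Import all_boot all_order all_algebra.
Set Implicit Arguments. Unset Strict Implicit. Unset Printing Implicit Defensive.
Import Order.TTheory GRing.Theory Num.Theory.
Local Open Scope ring_scope.

Definition edges_at (V : finType) (Es : {set {set V}}) (v : V) : {set {set V}} :=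
  [set e in Es | v \in e].

Definition ndeg (R : rcfType) (V : finType) (Es : {set {set V}}) (v : V) : R :=
  (#|edges_at Es v|)%:R.

Definition edeg (R : rcfType) (V : finType) (Es : {set {set V}}) (e : {set V}) : R :=
  (#|e|%:R)^-1 * \sum_(i in e) ndeg R Es i.

(* Permutation invariance in the first (multiset-valued, here a sequence
   considered up to permutation) argument. *)
Definition perm_invariant (A B C : eqType) (f : seq A -> B -> C) : Prop :=
  forall (s1 s2 : seq A) (y : B), perm_eq s1 s2 -> f s1 y = f s2 y.

Definition is_UniGCNII (R : rcfType) (d : nat) (alpha beta : R)
    (W : nat -> 'M[R]_d) (V : finType) (Es : {set {set V}})
    (X : nat -> V -> 'cV[R]_d) (Z : nat -> {set V} -> 'cV[R]_d) : Prop :=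
  forall t : nat,
    (forall e, e \in Es ->
       Z t.+1 e = (#|e|%:R)^-1 *: \sum_(u in e) X t u) /\
    (forall v : V,
       X t.+1 v =
         ((1 - beta)%:M + beta *: W t) *m
           ((1 - alpha) *:
              ((Num.sqrt (ndeg R Es v))^-1 *:
                 \sum_(e in edges_at Es v) (Num.sqrt (edeg R Es e))^-1 *: Z t.+1 e)
            + alpha *: X 0%N v)).

(* Main.v *)
Require Import Defs.
From HB Require Import structures.
From mathcomp Require Import all_boot all_order all_algebra.
Import Order.TTheory GRing.Theory Num.Theory.
Local Open Scope ring_scope.

Theorem proposition1 (R : rcfType) (d : nat) (alpha beta : R)
    (W : nat -> 'M[R]_d) :
  exists fVE : seq ('cV[R]_d * R) -> 'cV[R]_d * R -> 'cV[R]_d * R,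
  exists fEV : seq ('cV[R]_d * R) -> seq ('cV[R]_d * R) -> 'cV[R]_d * R,
    perm_invariant fVE /\ perm_invariant fEV /\
    forall (V : finType) (Es : {set {set V}})
           (X : nat -> V -> 'cV[R]_d) (Z : nat -> {set V} -> 'cV[R]_d),
      is_UniGCNII alpha beta W Es X Z ->
      forall t : nat,
        (forall e, e \in Es ->
           (Z t.+1 e, edeg R Es e) =
             fVE [seq (X t u, ndeg R Es u) | u <- enum e] (Z t e, edeg R Es e)) /\
        (forall v : V,
           (X t.+1 v, ndeg R Es v) =
             fEV [seq (Z t.+1 e, edeg R Es e) | e <- enum (edges_at Es v)]
                 [seq (X k v, ndeg R Es v) | k <- iota 0 t.+1]).
Proof.
exists (fun s y => (((size s)%:R)^-1 *: \sum_(p <- s) p.1, y.2)).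
exists (fun s h =>
  let x0 := (head (0, 0) h).1 in let dv := (head (0, 0) h).2 in
  (((1 - beta)%:M + beta *: W (size h).-1) *m
     ((1 - alpha) *: ((Num.sqrt dv)^-1 *: \sum_(p <- s) (Num.sqrt p.2)^-1 *: p.1)
      + alpha *: x0), dv)).
split; [|split].
- move=> s1 s2 y P /=. by rewrite (perm_big _ P) (perm_size P).
- move=> s1 s2 y P /=. by rewrite (perm_big _ P).
- move=> V Es X Z H t; have [H1 H2] := H t; split.
  + move=> e He /=. rewrite H1 // size_map big_map -cardE.
    by rewrite -big_enum.
  + move=> v /=. rewrite H2 size_map size_iota /= big_map.
    by rewrite -big_enum.
Qed.
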